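(* Let $J$ be a nonempty basic cylinder in $M_a$ and $p\in J$. Then $$\mathrm{GS}(J,p)=\Big\{p+\sum_{i\in\Lambda(J)}\alpha_ie_i\in M_a:\ \alpha_i\in\mathbb R \text{ for all } i\in\Lambda(J)\Big\}.$$
   Context: Let $a=\{a_i\}$ be a sequence of positive reals with $\sum_i a_i^2<\infty$, $M_a=\{x\in\mathbb{R}^{\mathbb N}:\sum_i a_i^2x_i^2<\infty\}$ with inner product $\langle x,y\rangle_a=\sum_i a_i^2x_iy_i$ and norm $\|\cdot\|_a$. $e_i$ denotes the sequence with $1$ in position $i$ and $0$ elsewhere; infinite sums are $\|\cdot\|_a$-limits of partial sums. For nonempty $E\subset M_a$, $\Lambda(E)$ is the set of $i$ for which there exist $x\in E$ and $\alpha\ne0$ with $x+\alpha e_i\in E$. For $p\in E$, $\mathrm{GS}(E,p)=\{p+\sum_i\alpha_i(x_i-p)\in M_a: x_i\in E,\ \alpha_i\in\mathbb R\}$, the index running over a finite or countable subset of $\mathbb N$. A basic cylinder is a set $J=\prod_{i=1}^\infty J_i$ where, for some $n\in\mathbb N$ and pairwise disjoint $\Lambda_1,\dots,\Lambda_4\subset\{1,\dots,n\}$: $J_i=[0,p_{2i}]$ ($i\in\Lambda_1$), $[p_{1i},p_{2i}]$ ($i\in\Lambda_2$), $[p_{1i},1]$ ($i\in\Lambda_3$), $\{p_{1i}\}$ ($i\in\Lambda_4$), $[0,1]$ otherwise, with $0<p_{1i}<p_{2i}<1$ for $i\in\Lambda_1\cup\Lambda_2\cup\Lambda_3$ and $0\le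 p_{1i}\le1$ for $i\in\Lambda_4$. *)

(* Defs.v *)
From Stdlib Require Import Reals ClassicalEpsilon.
From Coquelicot Require Import Coquelicot.
Open Scope R_scope.

(* Real sequences x = (x_i)_{i in N}.  NOTE: indices start at 0 here
   (paper index i corresponds to Rocq index i-1). *)
Definition seqR := nat -> R.

Definition szero : seqR := fun _ => 0.
Definition sadd (x y : seqR) : seqR := fun i => x i + y i.
Definition ssub (x y : seqR) : seqR := fun i => x i - y i.
Definition sscal (c : R) (x : seqR) : seqR := fun i => c * x i.

Definition e (i : nat) : seqR := fun j => if Nat.eq_dec j i then 1 else 0.

Definition In_Ma (a : seqR) (x : seqR) : Prop :=
  ex_series (fun i => (a i)^2 * (x i)^2).

Definition norm_a (a : seqR) (x : seqR) : R :=
  sqrt (Series (fun i => (a i)^2 * (x i)^2)).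

Fixpoint psum (I : nat -> Prop) (c : nat -> seqR) (n : nat) : seqR :=
  match n with
  | O => szero
  | S m => sadd (psum I c m)
                 (if excluded_middle_informative (I m) then c m else szero)
  end.

Definition converges_a (a : seqR) (s : nat -> seqR) (z : seqR) : Prop :=
  In_Ma a z /\ is_lim_seq (fun n => norm_a a (ssub z (s n))) 0.

Definition Lambda (E : seqR -> Prop) (i : nat) : Prop :=
  exists (x : seqR) (alpha : R),
    E x /\ alpha <> 0 /\ E (sadd x (sscal alpha (e i))).

(* GS(E,p) = { p + sum_{i in S} alpha_i (x_i - p) in M_a : x_i in E, alpha_i in R },
   S a (finite or countable) subset of N. *)
Definition GS (a : seqR) (E : seqR -> Prop) (p : seqR) (y : seqR) : Prop :=
  exists (S : nat -> Prop) (alpha : nat -> R) (x : nat -> seqR) (z : seqR),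
    (forall i, S i -> E (x i)) /\
    converges_a a (psum S (fun i => sscal (alpha i) (ssub (x i) p))) z /\
    y = sadd p z /\ In_Ma a y.

Definition coord_span (a : seqR) (J : seqR -> Prop) (p : seqR) (y : seqR) : Prop :=
  exists (alpha : nat -> R) (z : seqR),
    converges_a a (psum (Lambda J) (fun i => sscal (alpha i) (e i))) z /\
    y = sadd p z /\ In_Ma a y.

Definition basic_cylinder (J : seqR -> Prop) : Prop :=
  exists (n : nat) (L1 L2 L3 L4 : nat -> Prop) (p1 p2 : seqR),
    (forall i, (L1 i \/ L2 i \/ L3 i \/ L4 i) -> (i < n)%nat) /\
    (forall i, L1 i -> L2 i -> False) /\ (forall i, L1 i -> L3 i -> False) /\
    (forall i, L1 i -> L4 i -> False) /\ (forall i, L2 i -> L3 i -> False) /\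
    (forall i, L2 i -> L4 i -> False) /\ (forall i, L3 i -> L4 i -> False) /\
    (forall i, (L1 i \/ L2 i \/ L3 i) -> 0 < p1 i /\ p1 i < p2 i /\ p2 i < 1) /\
    (forall i, L4 i -> 0 <= p1 i <= 1) /\
    (forall x, J x <->
       forall i,
         (L1 i -> 0 <= x i <= p2 i) /\
         (L2 i -> p1 i <= x i <= p2 i) /\
         (L3 i -> p1 i <= x i <= 1) /\
         (L4 i -> x i = p1 i) /\
         (~ L1 i -> ~ L2 i -> ~ L3 i -> ~ L4 i -> 0 <= x i <= 1)).

(* Main.v *)
Require Import Defs.
From Stdlib Require Import Reals Lra Lia Arith Classical ClassicalEpsilon FunctionalExtensionality.
From Coquelicot Require Import Coquelicot.
Open Scope R_scope.

Lemma exle (f g : nat -> R) : (forall n, Rabs (f n) <= g n) -> ex_series g -> ex_series f.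
Proof. intros H Hg. apply (@ex_series_le R_AbsRing R_CompleteNormedModule f g); auto. Qed.

Lemma exscal (c : R) (f : nat -> R) : ex_series f -> ex_series (fun n => c * f n).
Proof. intros H. apply (@ex_series_scal_l R_AbsRing R_NormedModule c f H). Qed.

Lemma explus (f g : nat -> R) : ex_series f -> ex_series g -> ex_series (fun n => f n + g n).
Proof. intros H1 H2. apply (@ex_series_plus R_AbsRing R_NormedModule f g H1 H2). Qed.

Lemma exs_ext (f g : nat -> R) : (forall n, f n = g n) -> ex_series f -> ex_series g.
Proof. intros H; apply ex_series_ext; exact H. Qed.

Lemma Ma_bound (a u : seqR) (C : R) : ex_series (fun i => (a i)^2) ->
  (forall j, Rabs (u j) <= C) -> In_Ma a u.
Proof.
  intros Ha Hu. unfold In_Ma.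
  apply (exle _ (fun j => C^2 * (a j)^2)).
  - intros j.
    rewrite Rabs_pos_eq by nra.
    specialize (Hu j). assert (0 <= Rabs (u j)) by apply Rabs_pos.
    assert (u j ^2 <= C^2).
    { rewrite <- (pow2_abs (u j)). apply pow_incr; lra. }
    assert (0 <= a j ^2) by apply pow2_ge_0. nra.
  - apply exscal. exact Ha.
Qed.

Lemma Ma_add (a u v : seqR) : In_Ma a u -> In_Ma a v -> In_Ma a (sadd u v).
Proof.
  unfold In_Ma, sadd. intros Hu Hv.
  apply (exle _ (fun j => 2 * (a j ^2 * u j^2) + 2 * (a j^2 * v j^2))).
  - intros j.
    assert (0 <= a j ^2) by apply pow2_ge_0.
    assert (0 <= (u j + v j) ^2) by apply pow2_ge_0.
    rewrite Rabs_pos_eq by (apply Rmult_le_pos; auto).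
    assert ((u j + v j)^2 <= 2 * u j^2 + 2 * v j^2) by (pose proof (pow2_ge_0 (u j - v j)); nra).
    apply Rle_trans with (a j ^2 * (2 * u j^2 + 2 * v j^2)); [apply Rmult_le_compat_l; auto| right; ring].
  - apply explus; apply exscal; assumption.
Qed.

Lemma Ma_scal (a u : seqR) c : In_Ma a u -> In_Ma a (sscal c u).
Proof.
  unfold In_Ma, sscal. intros Hu.
  apply (exs_ext (fun n => (c^2) * (a n ^2 * u n^2))).
  intros n. ring.
  apply exscal; assumption.
Qed.

Lemma Ma_sub (a u v : seqR) : In_Ma a u -> In_Ma a v -> In_Ma a (ssub u v).
Proof.
  intros Hu Hv.
  assert (E : ssub u v = sadd u (sscal (-1) v)).
  { apply functional_extensionality; intro j; unfold ssub, sadd, sscal; ring. }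
  rewrite E. apply Ma_add; auto. apply Ma_scal; auto.
Qed.

Lemma Ma_zero a (Ha : ex_series (fun i => (a i)^2)) : In_Ma a szero.
Proof.
  unfold In_Ma, szero. apply (exs_ext (fun _ => 0)). intros; simpl; ring.
  apply (exs_ext (fun n => 0 * (a n ^ 2))). intros; ring.
  apply (exs_ext (fun n => 0 * (a n ^ 2))). intros; ring.
  apply exscal. exact Ha.
Qed.

Lemma psum_Ma a I c n (Ha : ex_series (fun i => (a i)^2)) : (forall i, I i -> In_Ma a (c i)) -> In_Ma a (psum I c n).
Proof.
  intros H. induction n; simpl. apply (Ma_zero a Ha).
  apply Ma_add; auto. destruct excluded_middle_informative; auto. apply (Ma_zero a Ha).
Qed.

Lemma psum_ext I c d n : (forall i, I i -> c i = d i) -> psum I c n = psum I d n.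
Proof.
  intros H; induction n; simpl; auto. rewrite IHn.
  destruct excluded_middle_informative; auto. rewrite H; auto.
Qed.

Lemma series_lim f : ex_series f -> is_lim_seq (fun m => sum_f_R0 f m) (Series f).
Proof.
  intros Hf. apply Series_correct in Hf.
  apply is_lim_seq_ext with (sum_n f). intros; apply sum_n_Reals.
  exact Hf.
Qed.

Lemma term_le f i : ex_series f -> (forall j, 0 <= f j) -> f i <= Series f.
Proof.
  intros Hf Hp.
  assert (L := series_lim f Hf).
  apply (is_lim_seq_incr_n _ i) in L.
  assert (H : Rbar_le (f i) (Series f)).
  { apply (is_lim_seq_le (fun _ => f i) (fun n => sum_f_R0 f (n + i)) ).
    - intros m. induction m; simpl.
      + destruct i; simpl. lra. pose proof (cond_pos_sum f i Hp). lra.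
      + pose proof (Hp (S (m+i))). lra.
    - apply is_lim_seq_const.
    - exact L. }
  exact H.
Qed.

Lemma tail_lim f : ex_series f ->
  is_lim_seq (fun n => Series (fun j => if lt_dec j n then 0 else f j)) 0.
Proof.
  intros Hf. apply is_lim_seq_incr_1.
  apply is_lim_seq_ext with (fun m => Series f - sum_f_R0 f m).
  - intros m. rewrite (Series_incr_n_aux (fun j => if lt_dec j (S m) then 0 else f j) (S m)).
    rewrite (Series_incr_n f (S m)) by (auto with arith || lia).
    simpl pred.
    + rewrite (Series_ext (fun k => if lt_dec (S m + k) (S m) then 0 else f (S m + k)%nat)
                 (fun k => f (S m + k)%nat)). ring.
      intros k. destruct lt_dec; auto. lia.
    + intros k Hk. destruct lt_dec; auto. lia.
  - replace (Finite 0) with (Finite (Series f - Series f)) by (f_equal; ring).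
    apply is_lim_seq_minus'. apply is_lim_seq_const. apply series_lim; auto.
Qed.

Lemma J_sub (J : seqR -> Prop) (hJ : basic_cylinder J) u p i :
  J u -> J p -> J (fun j => if Nat.eq_dec j i then u i else p j).
Proof.
  destruct hJ as (n & L1 & L2 & L3 & L4 & p1 & p2 & _ & _ & _ & _ & _ & _ & _ & _ & _ & HJ).
  intros Hu Hp. apply HJ. intros j.
  destruct (Nat.eq_dec j i) as [->|].
  - exact (proj1 (HJ u) Hu i).
  - exact (proj1 (HJ p) Hp j).
Qed.

Lemma J_01 (J : seqR -> Prop) (hJ : basic_cylinder J) w : J w -> forall j, 0 <= w j <= 1.
Proof.
  destruct hJ as (n & L1 & L2 & L3 & L4 & p1 & p2 & _ & _ & _ & _ & _ & _ & _ & H123 & H4 & HJ).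
  intros Hw j. destruct (proj1 (HJ w) Hw j) as (A1 & A2 & A3 & A4 & A5).
  destruct (classic (L1 j)). pose proof (H123 j (or_introl H)). specialize (A1 H); lra.
  destruct (classic (L2 j)). pose proof (H123 j (or_intror (or_introl H0))). specialize (A2 H0); lra.
  destruct (classic (L3 j)). pose proof (H123 j (or_intror (or_intror H1))). specialize (A3 H1); lra.
  destruct (classic (L4 j)). pose proof (H4 j H2). specialize (A4 H2); lra.
  auto.
Qed.

Theorem theorem3p5 (a : seqR)
  (ha_pos : forall i, 0 < a i)
  (ha_sq : ex_series (fun i => (a i)^2))
  (J : seqR -> Prop) (hJ : basic_cylinder J) (hJne : exists x, J x)
  (p : seqR) (hp : J p) :
  forall y : seqR, GS a J p y <-> coord_span a J p y.
Proof.
  intros y. split.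
  - intros (Sx & al & x & z & HS & [Hz Hlim] & Hy & HMy).
    assert (Key : forall i, ~ Lambda J i -> z i = 0).
    { intros i HnL.
      pose proof hJ as hJ'.
      destruct hJ' as (n & L1 & L2 & L3 & L4 & p1 & p2 & _ & D12 & D13 & D14 & D23 & D24 & D34 & H123 & H4 & HJ).
      assert (HL4 : L4 i).
      { apply NNPP. intros HnL4. apply HnL.
        destruct (proj1 (HJ p) hp i) as (A1 & A2 & A3 & A4 & A5).
        assert (Hv : exists v, v <> p i /\
           (L1 i -> 0 <= v <= p2 i) /\ (L2 i -> p1 i <= v <= p2 i) /\
           (L3 i -> p1 i <= v <= 1) /\ (L4 i -> v = p1 i) /\
           (~ L1 i -> ~ L2 i -> ~ L3 i -> ~ L4 i -> 0 <= v <= 1)).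
        { destruct (classic (L1 i)) as [h1|h1].
          { pose proof (H123 i (or_introl h1)). specialize (A1 h1).
            destruct (Req_dec (p i) 0).
            - exists (p2 i). repeat split; try lra; intros; try tauto; exfalso; eauto.
            - exists 0. repeat split; try lra; intros; try tauto; exfalso; eauto. }
          destruct (classic (L2 i)) as [h2|h2].
          { pose proof (H123 i (or_intror (or_introl h2))). specialize (A2 h2).
            destruct (Req_dec (p i) (p1 i)).
            - exists (p2 i). repeat split; try lra; intros; try tauto; exfalso; eauto.
            - exists (p1 i). repeat split; try lra; intros; try tauto; exfalso; eauto. }
          destruct (classic (L3 i)) as [h3|h3].
          { pose proof (H123 i (or_intror (or_intror h3))). specialize (A3 h3).
            destruct (Req_dec (p i) (p1 i)).
            - exists 1. repeat split; try lra; intros; try tauto; exfalso; eauto.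
            - exists (p1 i). repeat split; try lra; intros; try tauto; exfalso; eauto. }
          specialize (A5 h1 h2 h3 HnL4).
          destruct (Req_dec (p i) 0).
          - exists 1. repeat split; try lra; intros; tauto.
          - exists 0. repeat split; try lra; intros; tauto. }
        destruct Hv as (v & Hne & C).
        exists p, (v - p i). split; [exact hp|]. split; [lra|].
        apply HJ. intros j. unfold sadd, sscal, e.
        destruct (Nat.eq_dec j i) as [->|].
        - replace (p i + (v - p i) * 1) with v by ring. exact C.
        - replace (p j + (v - p i) * 0) with (p j) by ring. exact (proj1 (HJ p) hp j). }
      assert (Hs0 : forall m, psum Sx (fun k => sscal (al k) (ssub (x k) p)) m i = 0).
      { induction m; simpl. reflexivity. unfold sadd. rewrite IHm.
        destruct excluded_middle_informative as [hk|]; [|unfold szero; ring].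
        unfold sscal, ssub.
        destruct (proj1 (HJ (x m)) (HS m hk) i) as (_&_&_&Ex&_).
        destruct (proj1 (HJ p) hp i) as (_&_&_&Ep&_).
        rewrite (Ex HL4), (Ep HL4). ring. }
      assert (Hm : forall m, Rabs (a i * z i) <= norm_a a (ssub z (psum Sx (fun k => sscal (al k) (ssub (x k) p)) m))).
      { intros m.
        unfold norm_a.
        set (d := ssub z (psum Sx (fun k => sscal (al k) (ssub (x k) p)) m)).
        assert (Hd : In_Ma a d).
        { apply Ma_sub; auto. apply psum_Ma; auto. intros k hk.
          apply Ma_scal. apply Ma_bound with 1; auto. intros j. unfold ssub.
          pose proof (J_01 J hJ _ (HS k hk) j). pose proof (J_01 J hJ _ hp j).
          apply Rabs_le; lra. }
        assert (Hdi : d i = z i). { unfold d, ssub. rewrite Hs0. ring. }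
        rewrite <- sqrt_Rsqr_abs. apply sqrt_le_1_alt.
        assert (T := term_le (fun j => a j ^2 * d j ^2) i Hd).
        cbv beta in T. rewrite Hdi in T. unfold Rsqr.
        replace (a i * z i * (a i * z i)) with (a i ^2 * z i ^2) by ring.
        apply T. intros j. apply Rmult_le_pos; apply pow2_ge_0. }
      assert (Hb : Rbar_le (Rabs (a i * z i)) 0).
      { exact (is_lim_seq_le (fun _ => Rabs (a i * z i)) _ _ _ Hm (is_lim_seq_const _) Hlim). }
      simpl in Hb. pose proof (Rabs_pos (a i * z i)).
      assert (a i * z i = 0). { apply Rabs_eq_0; lra. }
      pose proof (ha_pos i). destruct (Rmult_integral _ _ H0); lra. }
    exists z, z. split; [split|]; auto.
    assert (Hps : forall n, psum (Lambda J) (fun i => sscal (z i) (e i)) n =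
                  (fun j => if lt_dec j n then z j else 0)).
    { induction n; simpl.
      - apply functional_extensionality; intros j. unfold szero. destruct (lt_dec j 0) as [hh|hh]; [exfalso; inversion hh | reflexivity].
      - rewrite IHn. apply functional_extensionality; intros j. unfold sadd, szero, sscal, e. cbv beta.
        destruct excluded_middle_informative as [hl|hl];
        destruct (lt_dec j n); destruct (lt_dec j (S n)); destruct (Nat.eq_dec j n); try lia; try ring.
        all: subst; try ring; rewrite (Key _ hl); ring. }
    apply is_lim_seq_ext with (fun n => sqrt (Series (fun j => if lt_dec j n then 0 else a j^2 * z j^2))).
    + intros n. unfold norm_a. rewrite Hps. f_equal. apply Series_ext. intros j.
      unfold ssub. destruct lt_dec; ring.
    + replace (Finite 0) with (Finite (sqrt 0)) by (rewrite sqrt_0; reflexivity).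
      apply is_lim_seq_continuous. apply continuity_pt_sqrt; lra.
      apply tail_lim. exact Hz.
  - intros (al & z & Hc & Hy & HMy).
    set (P := fun i w => J w /\ w i <> p i /\ forall j, j <> i -> w j = p j).
    assert (Hex : forall i, Lambda J i -> exists w, P i w).
    { intros i (x & alpha & Hx & Ha & Hxa).
      set (u := if Req_EM_T (x i) (p i) then sadd x (sscal alpha (e i)) else x).
      assert (Hu : J u /\ u i <> p i).
      { unfold u. destruct Req_EM_T as [heq|hneq]. split; auto. unfold sadd, sscal, e.
        destruct Nat.eq_dec; [|lia]. lra. auto. }
      exists (fun j => if Nat.eq_dec j i then u i else p j). split; [|split].
      - apply J_sub; tauto.
      - destruct Nat.eq_dec; [tauto|lia].
      - intros j hj. destruct Nat.eq_dec; [lia|auto]. }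
    set (xs := fun i => epsilon (inhabits p) (P i)).
    assert (Hxs : forall i, Lambda J i -> P i (xs i)).
    { intros i hi. apply epsilon_spec. auto. }
    exists (Lambda J), (fun i => al i / (xs i i - p i)), xs, z.
    split; [|split; [|split]]; auto.
    + intros i hi. apply (Hxs i hi).
    + assert (E : psum (Lambda J) (fun i => sscal (al i / (xs i i - p i)) (ssub (xs i) p))
                = psum (Lambda J) (fun i => sscal (al i) (e i))).
      { apply functional_extensionality; intros n. apply psum_ext.
        intros i hi. destruct (Hxs i hi) as (_ & Hne & Hoth).
        apply functional_extensionality; intros j. unfold sscal, ssub, e.
        destruct Nat.eq_dec as [->|hj].
        - field. lra.
        - rewrite (Hoth j hj). ring. }
      unfold converges_a in *. rewrite E. exact Hc.
Qed.
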